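(* Let $g_1,g_2\in\mathcal{G}_0$ with $g_2(x)>0$ for $x\in(0,1)$. Suppose the limit $L=\lim_{x\to0^+}g_1(x)/g_2(x)$ exists and is finite. Then for every finite partition $\mathcal{P}$ with $h(g_2,\mathcal{P})<\infty$ we have $h(g_1,\mathcal{P})=L\cdot h(g_2,\mathcal{P})$.
   Context: $\mathcal{G}_0$ is the set of concave functions $g:[0,1]\to\mathbb{R}$ with $g(0)=\lim_{x\to0^+}g(x)=0$. $T$ is a measure-preserving map of a probability space $(X,\Sigma,\mu)$. For a finite measurable partition $\mathcal{P}$, let $\mathcal{P}_n=\bigvee_{i=0}^{n-1}T^{-i}\mathcal{P}$, $H(g,\mathcal{P})=\sum_{A\in\mathcal{P}}g(\mu(A))$, and $h(g,\mathcal{P})=\limsup_{n\to\infty}\frac1nH(g,\mathcal{P}_n)$. *)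

(* Defs.v *)
From Stdlib Require Import Reals Lra List.
Open Scope R_scope.

Record ProbSpace := {
  pt : Type;
  meas : (pt -> Prop) -> Prop;
  mu : (pt -> Prop) -> R;
  meas_full : meas (fun _ => True);
  meas_compl : forall A, meas A -> meas (fun x => ~ A x);
  meas_cunion : forall A : nat -> pt -> Prop,
      (forall n, meas (A n)) -> meas (fun x => exists n, A n x);
  mu_nonneg : forall A, meas A -> 0 <= mu A;
  mu_full : mu (fun _ => True) = 1;
  mu_cadd : forall A : nat -> pt -> Prop,
      (forall n, meas (A n)) ->
      (forall n m x, n <> m -> A n x -> A m x -> False) ->
      infinite_sum (fun n => mu (A n)) (mu (fun x => exists n, A n x))
}.

Definition preimage {X : Type} (T : X -> X) (A : X -> Prop) : X -> Prop :=
  fun x => A (T x).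

Definition measure_preserving (Sp : ProbSpace) (T : pt Sp -> pt Sp) : Prop :=
  forall A, meas Sp A -> meas Sp (preimage T A) /\ mu Sp (preimage T A) = mu Sp A.

Definition is_partition (Sp : ProbSpace) (P : list (pt Sp -> Prop)) : Prop :=
  (forall A, In A P -> meas Sp A) /\
  (forall i j x, (i < length P)%nat -> (j < length P)%nat -> i <> j ->
      nth i P (fun _ => False) x -> nth j P (fun _ => False) x -> False) /\
  (forall x, exists A, In A P /\ A x).

Definition refine {X : Type} (P Q : list (X -> Prop)) : list (X -> Prop) :=
  flat_map (fun A => map (fun B => fun x => A x /\ B x) Q) P.

(** joinT T P n = P_n = P v T^{-1} P v ... v T^{-(n-1)} P  (P_0 = {X}). *)
Fixpoint joinT {X : Type} (T : X -> X) (P : list (X -> Prop)) (n : nat)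
  : list (X -> Prop) :=
  match n with
  | O => (fun _ => True) :: nil
  | S k => refine P (map (preimage T) (joinT T P k))
  end.

Definition Hg (Sp : ProbSpace) (g : R -> R) (P : list (pt Sp -> Prop)) : R :=
  fold_right (fun A acc => g (mu Sp A) + acc) 0 P.

Definition concave_on01 (g : R -> R) : Prop :=
  forall x y t, 0 <= x <= 1 -> 0 <= y <= 1 -> 0 <= t <= 1 ->
    t * g x + (1 - t) * g y <= g (t * x + (1 - t) * y).

Definition in_G0 (g : R -> R) : Prop :=
  concave_on01 g /\ g 0 = 0 /\
  (forall eps, eps > 0 -> exists delta, delta > 0 /\
     forall x, 0 < x < delta -> Rabs (g x) < eps).

Inductive ERbar := Fin (r : R) | PInf | MInf.

Definition is_limsup (u : nat -> R) (l : ERbar) : Prop :=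
  match l with
  | Fin r => forall eps, eps > 0 ->
      (forall N, exists n, (n >= N)%nat /\ u n > r - eps) /\
      (exists N, forall n, (n >= N)%nat -> u n < r + eps)
  | PInf => forall M N, exists n, (n >= N)%nat /\ u n > M
  | MInf => forall M, exists N, forall n, (n >= N)%nat -> u n < M
  end.

(** The sequence (1/n) H(g, P_n), n >= 1 (index shifted: n |-> n+1). *)
Definition entropy_seq (Sp : ProbSpace) (T : pt Sp -> pt Sp) (g : R -> R)
  (P : list (pt Sp -> Prop)) : nat -> R :=
  fun n => Hg Sp g (joinT T P (S n)) / INR (S n).

Definition has_entropy (Sp : ProbSpace) (T : pt Sp -> pt Sp) (g : R -> R)
  (P : list (pt Sp -> Prop)) (l : ERbar) : Prop :=
  is_limsup (entropy_seq Sp T g P) l.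

(* Main.v *)
Require Import Defs.
From Stdlib Require Import Reals List.
From Stdlib Require Import Lra Lia Psatz Classical FunctionalExtensionality PropExtensionality.
Open Scope R_scope.

Lemma set_ext {X} (A B : X -> Prop) : (forall x, A x <-> B x) -> A = B.
Proof. intros H; apply functional_extensionality; intros x; apply propositional_extensionality; apply H. Qed.

Definition lsum {X : Type} (f : X -> R) (l : list X) : R :=
  fold_right (fun a acc => f a + acc) 0 l.

Lemma lsum_cons {X} (f : X -> R) a l : lsum f (a::l) = f a + lsum f l.
Proof. reflexivity. Qed.
Lemma lsum_nil {X} (f : X -> R) : lsum f nil = 0.
Proof. reflexivity. Qed.

Lemma lsum_ext {X} (f g : X -> R) l : (forall a, In a l -> f a = g a) -> lsum f l = lsum g l.
Proof. induction l as [|a l IH]; intros H; [reflexivity|].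
 rewrite !lsum_cons. rewrite H by (simpl; auto). f_equal. apply IH; intros; apply H; simpl; auto. Qed.

Lemma lsum_le {X} (f g : X -> R) l : (forall a, In a l -> f a <= g a) -> lsum f l <= lsum g l.
Proof. induction l as [|a l IH]; intros H; [rewrite !lsum_nil; lra|].
 rewrite !lsum_cons.
 assert (f a <= g a) by (apply H; simpl; auto). assert (lsum f l <= lsum g l) by (apply IH; intros; apply H; simpl; auto). lra. Qed.

Lemma lsum_lin {X} (f g : X -> R) a b l : lsum (fun x => a * f x + b * g x) l = a * lsum f l + b * lsum g l.
Proof. induction l as [|x l IH]; rewrite ?lsum_nil, ?lsum_cons; [ring|]. rewrite ?lsum_cons, IH. ring. Qed.

Lemma lsum_scal {X} (f : X -> R) c l : lsum (fun x => c * f x) l = c * lsum f l.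
Proof. induction l as [|x l IH]; rewrite ?lsum_nil, ?lsum_cons; [ring|]. rewrite ?lsum_cons, IH. ring. Qed.

Lemma lsum_zero {X} (l : list X) : lsum (fun _ => 0) l = 0.
Proof. induction l; [reflexivity|]. rewrite !lsum_cons, IHl; ring. Qed.

Lemma lsum_plus {X} (f g : X -> R) l : lsum (fun x => f x + g x) l = lsum f l + lsum g l.
Proof. induction l as [|x l IH]; rewrite ?lsum_nil, ?lsum_cons; [ring|]. rewrite ?lsum_cons, IH. ring. Qed.

Lemma lsum_swap {X Y} (F : X -> Y -> R) P Q :
  lsum (fun a => lsum (fun b => F a b) Q) P = lsum (fun b => lsum (fun a => F a b) P) Q.
Proof. induction P as [|a P IH].
 - simpl. symmetry; apply lsum_zero.
 - change (lsum (fun b => F a b) Q + lsum (fun a => lsum (fun b => F a b) Q) P =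
     lsum (fun b => F a b + lsum (fun a => F a b) P) Q).
   rewrite IH. symmetry. apply (lsum_plus (fun b => F a b) (fun b => lsum (fun a0 => F a0 b) P)). Qed.

Lemma lsum_app {X} (g : X -> R) l1 l2 : lsum g (l1 ++ l2) = lsum g l1 + lsum g l2.
Proof. induction l1; simpl app; rewrite ?lsum_nil, ?lsum_cons; [ring|]. rewrite IHl1; ring. Qed.

Lemma lsum_flat_map {X Y} (f : X -> list Y) (g : Y -> R) l :
  lsum g (flat_map f l) = lsum (fun a => lsum g (f a)) l.
Proof. induction l as [|a l IH]; [reflexivity|].
 simpl flat_map. rewrite lsum_app, IH. reflexivity. Qed.

Lemma lsum_map {X Y} (h : X -> Y) (g : Y -> R) l : lsum g (map h l) = lsum (fun x => g (h x)) l.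
Proof. induction l; [reflexivity|]. simpl map. rewrite !lsum_cons, IHl; reflexivity. Qed.

Lemma lsum_nonneg {X} (f : X -> R) l : (forall x, In x l -> 0 <= f x) -> 0 <= lsum f l.
Proof. intros H. rewrite <- (lsum_zero l). apply lsum_le. exact H. Qed.

Lemma lsum_elem {X} (f : X -> R) l a : (forall x, In x l -> 0 <= f x) -> In a l -> f a <= lsum f l.
Proof. induction l as [|y l IH]; intros H Ha; [destruct Ha|].
 change (f a <= f y + lsum f l).
 assert (0 <= lsum f l) by (apply lsum_nonneg; intros; apply H; simpl; auto).
 destruct Ha as [<-|Ha]; [lra|].
 assert (0 <= f y) by (apply H; simpl; auto).
 assert (f a <= lsum f l) by (apply IH; auto; intros; apply H; simpl; auto). lra. Qed.

Lemma meas_empty (Sp : ProbSpace) : meas Sp (fun _ => False).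
Proof. replace (fun _ : pt Sp => False) with (fun x : pt Sp => ~ True).
 - apply meas_compl, meas_full.
 - apply set_ext; intros; tauto. Qed.

Lemma meas_inter (Sp : ProbSpace) A B : meas Sp A -> meas Sp B -> meas Sp (fun x => A x /\ B x).
Proof. intros HA HB.
 set (Sq := fun n : nat => match n with O => fun x => ~ A x | _ => fun x => ~ B x end).
 assert (HS : meas Sp (fun x => exists n, Sq n x)).
 { apply meas_cunion. intros [|n]; simpl; apply meas_compl; assumption. }
 apply meas_compl in HS.
 replace (fun x => A x /\ B x) with (fun x => ~ exists n, Sq n x); [exact HS|].
 apply set_ext; intros x; split.
 - intros H. split; apply NNPP; intros H'; apply H; [exists O | exists 1%nat]; exact H'.
 - intros [Ha Hb] [[|n] Hn]; simpl in Hn; auto.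
Qed.

Lemma mu_empty (Sp : ProbSpace) : mu Sp (fun _ => False) = 0.
Proof.
 pose proof (mu_cadd Sp (fun (_ : nat) (_ : pt Sp) => False) (fun _ => meas_empty Sp)
   (fun n m x _ H _ => H)) as H.
 cbv beta in H.
 replace (fun x : pt Sp => exists n : nat, False) with (fun _ : pt Sp => False) in H
   by (apply set_ext; intros x; split; [tauto| intros [_ []]]).
 set (c := mu Sp (fun _ => False)) in *.
 assert (Hc : 0 <= c) by (apply mu_nonneg, meas_empty).
 destruct (Req_dec c 0) as [|Hne]; [assumption|exfalso].
 destruct (H c) as [N HN]; [lra|].
 specialize (HN (S N) ltac:(lia)).
 rewrite sum_cte in HN. unfold R_dist in HN.
 rewrite !S_INR in HN. pose proof (pos_INR N).
 pose proof (Rle_abs (c * (INR N + 1 + 1) - c)).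
 assert (Hcp : 0 < c) by (destruct Hc as [Hc|Hc]; [exact Hc| congruence]). nra.
Qed.

Lemma sum_zero u N : (forall i, u i = 0) -> sum_f_R0 u N = 0.
Proof. intros H; induction N; simpl.
 - apply H.
 - rewrite IHN, H; ring. Qed.

Lemma sum_nth {X} (F : X -> R) (d : X) (l : list X) N :
  F d = 0 -> (length l <= S N)%nat ->
  sum_f_R0 (fun i => F (nth i l d)) N = lsum F l.
Proof.
 intros Hd; revert N; induction l as [|a l IH]; intros N Hlen.
 - apply sum_zero. intros [|i]; exact Hd.
 - destruct N as [|N].
   + simpl in Hlen. destruct l; [|simpl in Hlen; lia]. simpl. ring.
   + rewrite decomp_sum by lia. simpl. rewrite IH by (simpl in Hlen; lia). reflexivity.
Qed.

Lemma Padd Sp P (HP : is_partition Sp P) B : meas Sp B ->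
  lsum (fun A => mu Sp (fun x => A x /\ B x)) P = mu Sp B.
Proof.
 intros HB. destruct HP as [HPm [HPd HPc]].
 set (d := fun _ : pt Sp => False).
 set (Sq := fun i x => nth i P d x /\ B x).
 assert (HSm : forall n, meas Sp (Sq n)).
 { intros n. unfold Sq. apply meas_inter; [|exact HB].
   destruct (nth_in_or_default n P d) as [H|H]; [apply HPm; exact H| rewrite H; apply meas_empty]. }
 assert (HSd : forall n m x, n <> m -> Sq n x -> Sq m x -> False).
 { intros n m x Hnm [Hn _] [Hm _].
   destruct (Nat.lt_ge_cases n (length P)) as [Hn'|Hn'].
   - destruct (Nat.lt_ge_cases m (length P)) as [Hm'|Hm'].
     + exact (HPd n m x Hn' Hm' Hnm Hn Hm).
     + rewrite nth_overflow in Hm by exact Hm'. exact Hm.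
   - rewrite nth_overflow in Hn by exact Hn'. exact Hn. }
 pose proof (mu_cadd Sp Sq HSm HSd) as Hs.
 replace (fun x => exists n, Sq n x) with B in Hs.
 2:{ apply set_ext; intros x; split.
     - intros Hx. destruct (HPc x) as [A [HA Ax]].
       destruct (In_nth P A d HA) as [n [_ Hn]]. exists n. unfold Sq. rewrite Hn. tauto.
     - intros [n [_ Hx]]; exact Hx. }
 apply (UL_sequence (fun N => sum_f_R0 (fun n => mu Sp (Sq n)) N)); [|exact Hs].
 intros eps Heps. exists (length P). intros n Hn.
 assert (E := sum_nth (fun A => mu Sp (fun x => A x /\ B x)) d P n).
 cbv beta in E. unfold Sq. rewrite E.
 - unfold R_dist. rewrite Rminus_diag_eq by reflexivity. rewrite Rabs_R0. exact Heps.
 - replace (fun x => d x /\ B x) with d. apply mu_empty. apply set_ext; unfold d; tauto.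
 - lia.
Qed.

Lemma J Sp T (HT : measure_preserving Sp T) P (HP : is_partition Sp P) n :
  (forall A, In A (joinT T P n) -> meas Sp A) /\ lsum (mu Sp) (joinT T P n) = 1.
Proof.
 induction n as [|n [IHm IHs]]; simpl.
 - split.
   + intros A [<-|[]]. apply meas_full.
   + unfold lsum; simpl. rewrite mu_full; ring.
 - unfold refine. split.
   + intros A HA. apply in_flat_map in HA. destruct HA as [a [Ha HA]].
     apply in_map_iff in HA. destruct HA as [b [<- Hb]].
     apply in_map_iff in Hb. destruct Hb as [q [<- Hq]].
     apply meas_inter. apply (proj1 HP); exact Ha. exact (proj1 (HT q (IHm q Hq))).
   + rewrite lsum_flat_map.
     transitivity (lsum (fun a => lsum (fun b => mu Sp (fun x => a x /\ b x)) (map (preimage T) (joinT T P n))) P).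
     { apply lsum_ext; intros a _. rewrite lsum_map. reflexivity. }
     rewrite lsum_swap.
     transitivity (lsum (mu Sp) (map (preimage T) (joinT T P n))).
     { apply lsum_ext. intros b Hb. apply Padd; [exact HP|].
       apply in_map_iff in Hb. destruct Hb as [q [<- Hq]]. exact (proj1 (HT q (IHm q Hq))). }
     rewrite lsum_map, <- IHs. apply lsum_ext. intros q Hq. exact (proj2 (HT q (IHm q Hq))).
Qed.

Lemma mu01 Sp T (HT : measure_preserving Sp T) P (HP : is_partition Sp P) n A :
  In A (joinT T P n) -> 0 <= mu Sp A <= 1.
Proof. intros HA. destruct (J Sp T HT P HP n) as [Hm Hs]. split.
 - apply mu_nonneg, Hm, HA.
 - rewrite <- Hs. apply lsum_elem; [|exact HA]. intros; apply mu_nonneg, Hm; assumption. Qed.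

Lemma K2 Sp T (HT : measure_preserving Sp T) P (HP : is_partition Sp P) n g h a b c :
  (forall x, 0 <= x <= 1 -> a * g x + b * h x <= c * x) ->
  a * Hg Sp g (joinT T P n) + b * Hg Sp h (joinT T P n) <= c.
Proof.
 intros H. destruct (J Sp T HT P HP n) as [Hm Hs].
 change (a * lsum (fun A => g (mu Sp A)) (joinT T P n) + b * lsum (fun A => h (mu Sp A)) (joinT T P n) <= c).
 rewrite <- lsum_lin.
 eapply Rle_trans. apply (lsum_le _ (fun A => c * mu Sp A)).
 { intros A HA. apply H. eapply mu01; eassumption. }
 rewrite lsum_scal, Hs. lra.
Qed.

Lemma div_nonneg a b : 0 <= a -> 0 < b -> 0 <= a / b.
Proof. intros; unfold Rdiv; apply Rmult_le_pos; [lra|left; apply Rinv_0_lt_compat; lra]. Qed.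

Lemma xabs x y : 0 <= x -> -(Rabs y * x) <= x * y /\ x * y <= Rabs y * x.
Proof. intros Hx. destruct (Rcase_abs y) as [Hy|Hy].
 - rewrite Rabs_left by exact Hy. split; nra.
 - rewrite Rabs_pos_eq by lra. split; nra. Qed.

Lemma g_lower g : in_G0 g -> forall x, 0 <= x <= 1 -> x * g 1 <= g x.
Proof. intros [Hc [H0 _]] x Hx.
 pose proof (Hc 1 0 x ltac:(lra) ltac:(lra) Hx) as H.
 rewrite H0 in H. replace (x * 1 + (1 - x) * 0) with x in H by ring. lra. Qed.

Lemma g_bound g : in_G0 g -> exists M, 0 <= M /\ forall x, 0 <= x <= 1 -> Rabs (g x) <= M.
Proof. intros Hg. exists (2 * Rabs (g (/2)) + Rabs (g 1)).
 pose proof (Rabs_pos (g (/2))); pose proof (Rabs_pos (g 1)). split; [lra|].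
 intros x Hx.
 pose proof (g_lower g Hg x Hx). pose proof (g_lower g Hg (1-x) ltac:(lra)).
 pose proof (proj1 Hg x (1-x) (/2) Hx ltac:(lra) ltac:(lra)) as Hcc.
 replace (/2*x + (1-/2)*(1-x)) with (/2) in Hcc by field.
 pose proof (xabs x (g 1) ltac:(lra)). pose proof (xabs (1-x) (g 1) ltac:(lra)).
 pose proof (Rle_abs (g (/2))).
 apply Rabs_le. split; nra. Qed.

Lemma est g1 g2 L : in_G0 g1 -> in_G0 g2 -> (forall x, 0 < x < 1 -> g2 x > 0) ->
  (forall eps, eps > 0 -> exists delta, delta > 0 /\ forall x, 0 < x < delta -> Rabs (g1 x / g2 x - L) < eps) ->
  forall eps, eps > 0 -> exists C, forall x, 0 <= x <= 1 -> Rabs (g1 x - L * g2 x) <= eps * g2 x + C * x.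
Proof.
 intros H1 H2 Hpos HL eps Heps.
 destruct (HL eps Heps) as [d [Hd Hx]].
 destruct (g_bound g1 H1) as [M1 [HM1 B1]]. destruct (g_bound g2 H2) as [M2 [HM2 B2]].
 set (d' := Rmin d (/2)).
 assert (Hd' : 0 < d') by (unfold d'; apply Rmin_pos; lra).
 assert (Hd'1: d' <= d) by apply Rmin_l. assert (d' <= /2) by apply Rmin_r.
 set (K := M1 + Rabs L * M2 + eps * M2).
 assert (HK : 0 <= K). { unfold K. pose proof (Rabs_pos L). nra. }
 exists (K / d').
 assert (HC0 : 0 <= K / d') by (apply div_nonneg; lra).
 intros x Hx01.
 destruct (Req_dec x 0) as [E|Hx0].
 { subst x. rewrite (proj1 (proj2 H1)), (proj1 (proj2 H2)).
   replace (0 - L * 0) with 0 by ring. rewrite Rabs_R0. lra. }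
 destruct (Rlt_le_dec x d') as [Hs|Hl].
 - assert (Hg2 : g2 x > 0) by (apply Hpos; lra).
   pose proof (Hx x ltac:(lra)) as Hr.
   replace (g1 x - L * g2 x) with ((g1 x / g2 x - L) * g2 x) by (field; lra).
   rewrite Rabs_mult, (Rabs_pos_eq (g2 x)) by lra.
   assert (0 <= K / d' * x) by nra. nra.
 - pose proof (B1 x Hx01). pose proof (B2 x Hx01).
   assert (E1 : Rabs (g1 x - L * g2 x) <= M1 + Rabs L * M2).
   { unfold Rminus. eapply Rle_trans; [apply Rabs_triang|].
     rewrite Rabs_Ropp, Rabs_mult. pose proof (Rabs_pos L).
     apply Rplus_le_compat; [lra|]. apply Rmult_le_compat_l; lra. }
   assert (E2 : K / d' * x >= K).
   { replace K with (K / d' * d') at 2 by (field; lra). apply Rle_ge, Rmult_le_compat_l; lra. }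
   pose proof (Rle_abs (- g2 x)). rewrite Rabs_Ropp in *.
   assert (eps * g2 x >= - (eps * M2)) by nra.
   unfold K in *. lra.
Qed.

Lemma neg_case g1 g2 L : in_G0 g1 -> in_G0 g2 -> (forall x, 0 < x < 1 -> g2 x > 0) ->
  (forall eps, eps > 0 -> exists delta, delta > 0 /\ forall x, 0 < x < delta -> Rabs (g1 x / g2 x - L) < eps) ->
  L < 0 -> exists c, forall x, 0 <= x <= 1 -> g2 x <= c * x /\ g1 x <= c * x.
Proof.
 intros H1 H2 Hpos HL HL0.
 destruct (HL (-L/2) ltac:(lra)) as [d [Hd Hx]].
 destruct (g_bound g1 H1) as [M1 [HM1 B1]]. destruct (g_bound g2 H2) as [M2 [HM2 B2]].
 set (d' := Rmin d (/2)).
 assert (Hd' : 0 < d') by (unfold d'; apply Rmin_pos; lra).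
 assert (Hd'1: d' <= d) by apply Rmin_l. assert (d' <= /2) by apply Rmin_r.
 set (c1 := 2 * g1 1 / L).
 assert (Hc1 : L * c1 = 2 * g1 1) by (unfold c1; field; lra).
 set (K := (M1 + M2) / d').
 assert (HK : 0 <= K) by (apply div_nonneg; lra).
 exists (Rabs c1 + K).
 intros x Hx01.
 pose proof (Rabs_pos c1). pose proof (Rle_abs c1).
 destruct (Req_dec x 0) as [E|Hx0].
 { subst x. rewrite (proj1 (proj2 H1)), (proj1 (proj2 H2)). lra. }
 assert (Hca : c1 * x <= (Rabs c1 + K) * x) by nra.
 assert (0 <= (Rabs c1 + K) * x) by nra.
 destruct (Rlt_le_dec x d') as [Hs|Hl].
 - assert (Hg2 : g2 x > 0) by (apply Hpos; lra).
   pose proof (Hx x ltac:(lra)) as Hr.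
   assert (Hr' : g1 x / g2 x < L / 2) by (pose proof (Rle_abs (g1 x / g2 x - L)); lra).
   assert (Hg1 : g1 x < L / 2 * g2 x).
   { replace (g1 x) with (g1 x / g2 x * g2 x) by (field; lra). apply Rmult_lt_compat_r; lra. }
   pose proof (g_lower g1 H1 x Hx01).
   split.
   + destruct (Rle_lt_dec (g2 x) (c1 * x)) as [Hle|Hgt]; [lra|exfalso].
     pose proof (Rmult_lt_gt_compat_neg_l L _ _ HL0 Hgt).
     assert (L * (c1 * x) = 2 * g1 1 * x) by (rewrite <- Rmult_assoc, Hc1; ring). nra.
   + nra.
 - pose proof (B1 x Hx01). pose proof (B2 x Hx01).
   pose proof (Rle_abs (g1 x)). pose proof (Rle_abs (g2 x)).
   assert (E2 : K * x >= M1 + M2).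
   { replace (M1 + M2) with (K * d') by (unfold K; field; lra). apply Rle_ge, Rmult_le_compat_l; lra. }
   split; nra.
Qed.

Lemma ev_small K eps : eps > 0 -> exists N, forall n, (n >= N)%nat -> K / INR (S n) < eps.
Proof.
 intros He. destruct (archimed_cor1 (eps / (Rabs K + 1))) as [N [HN HN0]].
 { apply Rdiv_lt_0_compat; [lra| pose proof (Rabs_pos K); lra]. }
 exists N. intros n Hn.
 assert (HINR : INR N <= INR (S n)) by (apply le_INR; lia).
 assert (HN' : 0 < INR N) by (apply lt_0_INR; lia).
 assert (Hinv : / INR (S n) <= / INR N) by (apply Rinv_le_contravar; lra).
 assert (0 < / INR (S n)) by (apply Rinv_0_lt_compat; lra).
 pose proof (Rabs_pos K). pose proof (Rle_abs K).
 unfold Rdiv.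
 apply Rle_lt_trans with (Rabs K * / INR N).
 { apply Rle_trans with (Rabs K * / INR (S n)). apply Rmult_le_compat_r; lra. apply Rmult_le_compat_l; lra. }
 apply Rle_lt_trans with (Rabs K * (eps / (Rabs K + 1))). apply Rmult_le_compat_l; lra.
 replace (Rabs K * (eps / (Rabs K + 1))) with (eps - eps / (Rabs K + 1)) by (field; lra).
 assert (0 < eps / (Rabs K + 1)) by (apply Rdiv_lt_0_compat; lra). lra.
Qed.

Lemma ls_zero (u : nat -> R) K : (forall n, Rabs (u n) <= K / INR (S n)) -> is_limsup u (Fin 0).
Proof.
 intros H eps He. destruct (ev_small K eps He) as [N0 HN0]. split.
 - intros N. exists (Nat.max N N0). split; [lia|].
   pose proof (H (Nat.max N N0)). pose proof (HN0 (Nat.max N N0) ltac:(lia)).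
   pose proof (Rle_abs (- u (Nat.max N N0))). rewrite Rabs_Ropp in *. lra.
 - exists N0. intros n Hn. pose proof (H n). pose proof (HN0 n Hn). pose proof (Rle_abs (u n)). lra.
Qed.

Lemma ls_unique0 u h K : is_limsup u (Fin h) -> (forall n, Rabs (u n) <= K / INR (S n)) -> h = 0.
Proof.
 intros Hl Hb. destruct (Rtotal_order h 0) as [Hneg|[E|Hp]]; [exfalso| exact E| exfalso].
 - destruct (Hl (-h/2) ltac:(lra)) as [_ [N1 HN1]].
   destruct (ev_small K (-h/2) ltac:(lra)) as [N2 HN2].
   pose proof (HN1 (Nat.max N1 N2) ltac:(lia)). pose proof (HN2 (Nat.max N1 N2) ltac:(lia)).
   pose proof (Hb (Nat.max N1 N2)).
   pose proof (Rle_abs (- u (Nat.max N1 N2))). rewrite Rabs_Ropp in *. lra.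
 - destruct (Hl (h/2) ltac:(lra)) as [Hf _].
   destruct (ev_small K (h/2) ltac:(lra)) as [N2 HN2].
   destruct (Hf N2) as [n [Hn Hu]]. pose proof (HN2 n Hn). pose proof (Hb n). pose proof (Rle_abs (u n)). lra.
Qed.

Lemma abs_bound_div u A B r : u <= A / r -> -u <= Rabs B / r -> r > 0 -> Rabs u <= (Rabs A + Rabs B) / r.
Proof. intros H1 H2 Hr. unfold Rdiv in *. assert (0 < / r) by (apply Rinv_0_lt_compat; lra).
 pose proof (Rle_abs A). pose proof (Rle_abs B). pose proof (Rabs_pos A). pose proof (Rabs_pos B).
 apply Rabs_le. split; nra. Qed.

Theorem mainTheorem4 (Sp : ProbSpace) (T : pt Sp -> pt Sp)
  (HT : measure_preserving Sp T)
  (g1 g2 : R -> R) (Hg1 : in_G0 g1) (Hg2 : in_G0 g2)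
  (Hpos : forall x, 0 < x < 1 -> g2 x > 0)
  (L : R)
  (HL : forall eps, eps > 0 -> exists delta, delta > 0 /\
          forall x, 0 < x < delta -> Rabs (g1 x / g2 x - L) < eps)
  (P : list (pt Sp -> Prop)) (HP : is_partition Sp P)
  (h2 : R) (Hh2 : has_entropy Sp T g2 P (Fin h2)) :
  has_entropy Sp T g1 P (Fin (L * h2)).
Proof.
 unfold has_entropy in *.
 assert (Kn : forall g h al be c, (forall x, 0<=x<=1 -> al * g x + be * h x <= c * x) ->
   forall n, al * entropy_seq Sp T g P n + be * entropy_seq Sp T h P n <= c / INR (S n)).
 { intros g h al be c H n. unfold entropy_seq.
   pose proof (K2 Sp T HT P HP (S n) g h al be c H) as Hk.
   assert (Hr : 0 < INR (S n)) by (apply lt_0_INR; lia).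
   unfold Rdiv.
   replace (al * (Hg Sp g (joinT T P (S n)) * / INR (S n)) + be * (Hg Sp h (joinT T P (S n)) * / INR (S n))) with ((al * Hg Sp g (joinT T P (S n)) + be * Hg Sp h (joinT T P (S n))) * / INR (S n)) by ring.
   apply Rmult_le_compat_r; [left; apply Rinv_0_lt_compat; exact Hr | exact Hk]. }
 assert (Hrpos : forall n, INR (S n) > 0) by (intros; apply lt_0_INR; lia).
 assert (Hb_low : forall n, -1 * entropy_seq Sp T g2 P n + 0 * entropy_seq Sp T g2 P n <= Rabs (g2 1) / INR (S n)).
 { apply Kn. intros x Hx. pose proof (g_lower g2 Hg2 x Hx). pose proof (xabs x (g2 1) ltac:(lra)). lra. }
 destruct (Rlt_le_dec L 0) as [Lneg|Lpos].
 - destruct (neg_case g1 g2 L Hg1 Hg2 Hpos HL Lneg) as [c Hc].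
   assert (Bb : forall n, Rabs (entropy_seq Sp T g2 P n) <= (Rabs c + Rabs (g2 1)) / INR (S n)).
   { intros n. apply abs_bound_div; [| |apply Hrpos].
     - pose proof (Kn g2 g2 1 0 c ltac:(intros x Hx; specialize (Hc x Hx); lra) n). lra.
     - pose proof (Hb_low n). lra. }
   assert (Aa : forall n, Rabs (entropy_seq Sp T g1 P n) <= (Rabs c + Rabs (g1 1)) / INR (S n)).
   { intros n. apply abs_bound_div; [| |apply Hrpos].
     - pose proof (Kn g1 g1 1 0 c ltac:(intros x Hx; specialize (Hc x Hx); lra) n). lra.
     - pose proof (Kn g1 g1 (-1) 0 (Rabs (g1 1)) ltac:(intros x Hx; pose proof (g_lower g1 Hg1 x Hx);
          pose proof (xabs x (g1 1) ltac:(lra)); lra) n). lra. }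
   pose proof (ls_unique0 _ _ _ Hh2 Bb) as ->. rewrite Rmult_0_r. exact (ls_zero _ _ Aa).
 - unfold is_limsup. intros e He.
   set (B := Rabs h2 + 1).
   assert (HB : B > 0) by (unfold B; pose proof (Rabs_pos h2); lra).
   set (eps := e / (3 * B)).
   assert (Heps : eps > 0) by (unfold eps; apply Rdiv_lt_0_compat; lra).
   assert (HepsB : eps * B = e / 3) by (unfold eps; field; lra).
   set (e' := e / (3 * (L + 1))).
   assert (He' : e' > 0) by (unfold e'; apply Rdiv_lt_0_compat; lra).
   assert (HLe' : L * e' = e / 3 - e') by (unfold e'; field; lra).
   destruct (est g1 g2 L Hg1 Hg2 Hpos HL eps Heps) as [C HC].
   assert (F1 : forall n, 1 * entropy_seq Sp T g1 P n + (-(L+eps)) * entropy_seq Sp T g2 P n <= C / INR (S n)).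
   { apply Kn. intros x Hx. specialize (HC x Hx). pose proof (Rle_abs (g1 x - L * g2 x)). lra. }
   assert (F2 : forall n, -1 * entropy_seq Sp T g1 P n + (L - eps) * entropy_seq Sp T g2 P n <= C / INR (S n)).
   { apply Kn. intros x Hx. specialize (HC x Hx). pose proof (Rle_abs (-(g1 x - L * g2 x))).
     rewrite Rabs_Ropp in *. lra. }
   destruct (Hh2 e' He') as [Hfreq [N1 HN1]]. destruct (Hh2 1 ltac:(lra)) as [_ [N2 HN2]].
   destruct (ev_small C (e/3) ltac:(lra)) as [N3 HN3].
   destruct (ev_small (Rabs (g2 1)) 1 ltac:(lra)) as [N4 HN4].
   set (N := Nat.max N1 (Nat.max N2 (Nat.max N3 N4))).
   assert (Heb : forall n, (n >= N)%nat -> -(e/3) <= eps * entropy_seq Sp T g2 P n <= e/3).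
   { intros n Hn. pose proof (HN2 n ltac:(unfold N in Hn; lia)). pose proof (HN4 n ltac:(unfold N in Hn; lia)).
     pose proof (Hb_low n). pose proof (Rle_abs h2). pose proof (Rabs_pos h2).
     assert (-B <= entropy_seq Sp T g2 P n <= B) by (unfold B; set (q := Rabs (g2 1) / INR (S n)) in *; split; lra).
     assert (eps * entropy_seq Sp T g2 P n <= eps * B) by (apply Rmult_le_compat_l; lra).
     assert (eps * (-B) <= eps * entropy_seq Sp T g2 P n) by (apply Rmult_le_compat_l; lra).
     lra. }
   split.
   + intros M. destruct (Hfreq (Nat.max M N)) as [n [Hn Hbn]]. exists n. split; [lia|].
     pose proof (F2 n). pose proof (Heb n ltac:(lia)). pose proof (HN3 n ltac:(unfold N in Hn; lia)).
     assert (L * (h2 - e') <= L * entropy_seq Sp T g2 P n) by (apply Rmult_le_compat_l; lra).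
     lra.
   + exists N. intros n Hn.
     pose proof (F1 n). pose proof (Heb n Hn). pose proof (HN3 n ltac:(unfold N in Hn; lia)).
     pose proof (HN1 n ltac:(unfold N in Hn; lia)).
     assert (L * entropy_seq Sp T g2 P n <= L * (h2 + e')) by (apply Rmult_le_compat_l; lra).
     lra.
Qed.
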